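(* Let $P>0$, $\zeta\in\mathbb{R}$, and let $q=(q_1,q_2)^\intercal:\mathbb{R}\to\mathbb{C}^2$ be smooth and $P$-periodic. Define $\alpha=-i\zeta$, $\beta=q$, $\gamma=-\overline q$, $\rho=i\zeta I_2$, and $$A=-2i\zeta^2+iq^\intercal\overline q,\quad B=2\zeta q+iq_x,\quad C=-2\zeta\overline q+i\overline q_x,\quad D=2i\zeta^2I_2-i\overline q\,q^\intercal,$$ $X=\begin{pmatrix}\alpha&\beta^\intercal\\ \gamma&\rho\end{pmatrix}$, $T=\begin{pmatrix}A&B^\intercal\\ C&D\end{pmatrix}$ (both $3\times3$), and assume $T_x=XT-TX$ for all $x$. Then $T(x)$ is skew-Hermitian, so every eigenvalue $\Omega$ of $T$ is purely imaginary; and if $\Omega$ is an $x$-independent eigenvalue of $T$ with $\det(D(x)-\Omega I_2)\neq0$ for all $x$, then $$\mathrm{Re}\int_0^P\beta^\intercal(D-\Omega I_2)^{-1}C\,dx=0 .$$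
   Context: This is the Lax pair $v_x=Xv$, $v_t=Tv$ of the Manakov system (two-component vector NLS) $iq_{j,t}+q_{j,xx}+2(|q_1|^2+|q_2|^2)q_j=0$, $j=1,2$, for a stationary potential; the hypothesis $T_x=[X,T]$ is the compatibility condition. $I_2$ is the $2\times2$ identity, overline is complex conjugation, ${}^\intercal$ is transpose. The displayed vanishing is the condition that the eigenfunction $v=e^{\Omega t}y_1(x)\,(a,-(D-\Omega I_2)^{-1}Ca)^\intercal$, $y_1'=(\alpha-\beta^\intercal(D-\Omega I_2)^{-1}C)y_1$, is bounded in $x$. *)

(* Defs.v *)
From Stdlib Require Import Reals.
Open Scope R_scope.

Record Cpx := mkC { Cre : R; Cim : R }.

Definition C0 : Cpx := mkC 0 0.
Definition Cof (r : R) : Cpx := mkC r 0.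
Definition Ci : Cpx := mkC 0 1.
Definition Cadd (z w : Cpx) : Cpx := mkC (Cre z + Cre w) (Cim z + Cim w).
Definition Copp (z : Cpx) : Cpx := mkC (- Cre z) (- Cim z).
Definition Csub (z w : Cpx) : Cpx := Cadd z (Copp w).
Definition Cmul (z w : Cpx) : Cpx :=
  mkC (Cre z * Cre w - Cim z * Cim w) (Cre z * Cim w + Cim z * Cre w).
Definition Cconj (z : Cpx) : Cpx := mkC (Cre z) (- Cim z).
Definition Cinv (z : Cpx) : Cpx :=
  mkC (Cre z / (Cre z * Cre z + Cim z * Cim z))
      (- Cim z / (Cre z * Cre z + Cim z * Cim z)).

Definition smoothR (f : R -> R) : Prop :=
  exists d : nat -> R -> R,
    (forall x, d O x = f x) /\
    (forall n x, derivable_pt_lim (d n) x (d (S n) x)).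

Definition smoothC (f : R -> Cpx) : Prop :=
  smoothR (fun x => Cre (f x)) /\ smoothR (fun x => Cim (f x)).

Definition Cderiv (f : R -> Cpx) (x : R) (l : Cpx) : Prop :=
  derivable_pt_lim (fun y => Cre (f y)) x (Cre l) /\
  derivable_pt_lim (fun y => Cim (f y)) x (Cim l).

(* 3x3 matrices, indices 0,1,2 *)
Definition Mat3 := nat -> nat -> Cpx.

Definition mulM3 (M N : Mat3) : Mat3 := fun i j =>
  Cadd (Cmul (M i 0%nat) (N 0%nat j))
       (Cadd (Cmul (M i 1%nat) (N 1%nat j)) (Cmul (M i 2%nat) (N 2%nat j))).

Definition subM3 (M N : Mat3) : Mat3 := fun i j => Csub (M i j) (N i j).

Definition skew_hermitian3 (M : Mat3) : Prop :=
  forall i j, (i < 3)%nat -> (j < 3)%nat -> M i j = Copp (Cconj (M j i)).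

Definition is_eigenvalue3 (M : Mat3) (Om : Cpx) : Prop :=
  exists v : nat -> Cpx,
    (exists k, (k < 3)%nat /\ v k <> C0) /\
    (forall i, (i < 3)%nat ->
       Cadd (Cmul (M i 0%nat) (v 0%nat))
         (Cadd (Cmul (M i 1%nat) (v 1%nat)) (Cmul (M i 2%nat) (v 2%nat)))
       = Cmul Om (v i)).

Section Lax.
Variables (zeta : R) (q1 q2 q1x q2x : R -> Cpx).

Definition qv (x : R) (j : nat) : Cpx := match j with O => q1 x | _ => q2 x end.
Definition qxv (x : R) (j : nat) : Cpx := match j with O => q1x x | _ => q2x x end.

Definition alphaL : Cpx := Cmul (Copp Ci) (Cof zeta).
Definition betaL (x : R) (j : nat) : Cpx := qv x j.
Definition gammaL (x : R) (j : nat) : Cpx := Copp (Cconj (qv x j)).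
Definition rhoL : Cpx := Cmul Ci (Cof zeta).

Definition AL (x : R) : Cpx :=
  Cadd (Cmul (Cof (-2)) (Cmul Ci (Cof (zeta * zeta))))
       (Cmul Ci (Cadd (Cmul (q1 x) (Cconj (q1 x))) (Cmul (q2 x) (Cconj (q2 x))))).
Definition BL (x : R) (j : nat) : Cpx :=
  Cadd (Cmul (Cof (2 * zeta)) (qv x j)) (Cmul Ci (qxv x j)).
Definition CL (x : R) (j : nat) : Cpx :=
  Cadd (Cmul (Cof (-2 * zeta)) (Cconj (qv x j))) (Cmul Ci (Cconj (qxv x j))).
Definition DL (x : R) (j k : nat) : Cpx :=
  Csub (if Nat.eqb j k then Cmul (Cof 2) (Cmul Ci (Cof (zeta * zeta))) else C0)
       (Cmul Ci (Cmul (Cconj (qv x j)) (qv x k))).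

Definition Xmat (x : R) : Mat3 := fun i j =>
  match i, j with
  | O, O => alphaL
  | O, S j' => betaL x j'
  | S i', O => gammaL x i'
  | S i', S j' => if Nat.eqb i' j' then rhoL else C0
  end.

Definition Tmat (x : R) : Mat3 := fun i j =>
  match i, j with
  | O, O => AL x
  | O, S j' => BL x j'
  | S i', O => CL x i'
  | S i', S j' => DL x i' j'
  end.

Definition DshiftL (x : R) (Om : Cpx) (j k : nat) : Cpx :=
  Csub (DL x j k) (if Nat.eqb j k then Om else C0).

Definition det2 (M : nat -> nat -> Cpx) : Cpx :=
  Csub (Cmul (M 0%nat 0%nat) (M 1%nat 1%nat)) (Cmul (M 0%nat 1%nat) (M 1%nat 0%nat)).

Definition inv2 (M : nat -> nat -> Cpx) (j k : nat) : Cpx :=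
  let adj := match j, k with
             | O, O => M 1%nat 1%nat
             | O, _ => Copp (M 0%nat 1%nat)
             | _, O => Copp (M 1%nat 0%nat)
             | _, _ => M 0%nat 0%nat
             end in
  Cmul adj (Cinv (det2 M)).

Definition integrandL (Om : Cpx) (x : R) : Cpx :=
  let Mi := inv2 (DshiftL x Om) in
  Cadd (Cadd (Cmul (betaL x 0) (Cmul (Mi 0%nat 0%nat) (CL x 0)))
             (Cmul (betaL x 0) (Cmul (Mi 0%nat 1%nat) (CL x 1))))
       (Cadd (Cmul (betaL x 1) (Cmul (Mi 1%nat 0%nat) (CL x 0)))
             (Cmul (betaL x 1) (Cmul (Mi 1%nat 1%nat) (CL x 1)))).

End Lax.

(* Main.v *)
Require Import Defs.
From Stdlib Require Import Reals Lra Lia Field FunctionalExtensionality.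
Open Scope R_scope.


Definition Cone : Cpx := Cof 1.
Definition Cdiv (z w : Cpx) : Cpx := Cmul z (Cinv w).

Lemma Cext (z w : Cpx) : Cre z = Cre w -> Cim z = Cim w -> z = w.
Proof. destruct z, w; simpl; intros -> ->; reflexivity. Qed.

Lemma Cring : ring_theory C0 Cone Cadd Cmul Csub Copp (@eq Cpx).
Proof.
  constructor; intros; apply Cext; destruct x; try destruct y; try destruct z;
  unfold C0, Cone, Cof, Cadd, Cmul, Csub, Copp; simpl; ring.
Qed.

Lemma Cnorm_pos (z : Cpx) : z <> C0 -> Cre z * Cre z + Cim z * Cim z <> 0.
Proof.
  destruct z as [a b]; simpl; intros H E. apply H.
  assert (a = 0) by nra. assert (b = 0) by nra. subst. reflexivity.
Qed.

Lemma Cfield : field_theory C0 Cone Cadd Cmul Csub Copp Cdiv Cinv (@eq Cpx).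
Proof.
  constructor.
  - exact Cring.
  - unfold Cone, C0, Cof; intro H; injection H; lra.
  - reflexivity.
  - intros p Hp. apply Cext; pose proof (Cnorm_pos p Hp) as N; destruct p as [a b];
    unfold Cinv, Cmul, Cone, Cof; simpl in *; field; auto.
Qed.

Add Field Cfieldinst : Cfield.

Lemma Cderiv_val f x l l' : Cderiv f x l -> l = l' -> Cderiv f x l'.
Proof. intros H ->; exact H. Qed.

Lemma Cderiv_ext f g x l : (forall y, f y = g y) -> Cderiv f x l -> Cderiv g x l.
Proof. intros H; replace g with f; auto. apply functional_extensionality; auto. Qed.

Lemma dpl_val f x l l' : derivable_pt_lim f x l -> l = l' -> derivable_pt_lim f x l'.
Proof. intros H ->; exact H. Qed.

Lemma Cderiv_const c x : Cderiv (fun _ => c) x C0.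
Proof. split; simpl; apply derivable_pt_lim_const. Qed.

Lemma Cderiv_add f g x lf lg : Cderiv f x lf -> Cderiv g x lg ->
  Cderiv (fun y => Cadd (f y) (g y)) x (Cadd lf lg).
Proof.
  intros [H1 H2] [H3 H4]; split; simpl.
  - exact (derivable_pt_lim_plus _ _ _ _ _ H1 H3).
  - exact (derivable_pt_lim_plus _ _ _ _ _ H2 H4).
Qed.

Lemma Cderiv_opp f x lf : Cderiv f x lf -> Cderiv (fun y => Copp (f y)) x (Copp lf).
Proof.
  intros [H1 H2]; split; simpl.
  - exact (derivable_pt_lim_opp _ _ _ H1).
  - exact (derivable_pt_lim_opp _ _ _ H2).
Qed.

Lemma Cderiv_sub f g x lf lg : Cderiv f x lf -> Cderiv g x lg ->
  Cderiv (fun y => Csub (f y) (g y)) x (Csub lf lg).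
Proof. intros; unfold Csub. apply Cderiv_add; auto. apply Cderiv_opp; auto. Qed.

Lemma Cderiv_mul f g x lf lg : Cderiv f x lf -> Cderiv g x lg ->
  Cderiv (fun y => Cmul (f y) (g y)) x (Cadd (Cmul lf (g x)) (Cmul (f x) lg)).
Proof.
  intros [H1 H2] [H3 H4]; split; simpl.
  - pose proof (derivable_pt_lim_minus _ _ _ _ _ (derivable_pt_lim_mult _ _ _ _ _ H1 H3)
       (derivable_pt_lim_mult _ _ _ _ _ H2 H4)) as X.
    unfold minus_fct, mult_fct in X. eapply dpl_val; [exact X|ring].
  - pose proof (derivable_pt_lim_plus _ _ _ _ _ (derivable_pt_lim_mult _ _ _ _ _ H1 H4)
       (derivable_pt_lim_mult _ _ _ _ _ H2 H3)) as X.
    unfold plus_fct, mult_fct in X. eapply dpl_val; [exact X|ring].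
Qed.

Lemma Cderiv_conj f x lf : Cderiv f x lf -> Cderiv (fun y => Cconj (f y)) x (Cconj lf).
Proof.
  intros [H1 H2]; unfold Cconj; split; simpl; auto. exact (derivable_pt_lim_opp _ _ _ H2).
Qed.

Lemma Cderiv_inv f x lf : f x <> C0 -> Cderiv f x lf ->
  Cderiv (fun y => Cinv (f y)) x (Copp (Cmul lf (Cinv (Cmul (f x) (f x))))).
Proof.
  intros Hn [H1 H2]. pose proof (Cnorm_pos _ Hn) as N.
  pose proof (derivable_pt_lim_plus _ _ _ _ _ (derivable_pt_lim_mult _ _ _ _ _ H1 H1)
       (derivable_pt_lim_mult _ _ _ _ _ H2 H2)) as Hd.
  unfold plus_fct, mult_fct in Hd.
  split; simpl.
  - pose proof (derivable_pt_lim_div _ _ _ _ _ H1 Hd N) as X. unfold div_fct in X.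
    eapply dpl_val; [exact X|].
    destruct (f x) as [a b]; destruct lf as [c d]; simpl in *. unfold Rsqr. field.
    assert ((a * a - b * b) * (a * a - b * b) + (a * b + b * a) * (a * b + b * a) = (a*a+b*b)*(a*a+b*b)) as E by ring. rewrite E. split; auto; apply Rmult_integral_contrapositive; auto.
  - pose proof (derivable_pt_lim_div _ _ _ _ _ (derivable_pt_lim_opp _ _ _ H2) Hd N) as X.
    unfold div_fct, opp_fct in X.
    eapply dpl_val; [exact X|].
    destruct (f x) as [a b]; destruct lf as [c d]; simpl in *. unfold Rsqr. field.
    assert ((a * a - b * b) * (a * a - b * b) + (a * b + b * a) * (a * b + b * a) = (a*a+b*b)*(a*a+b*b)) as E by ring. rewrite E. split; auto; apply Rmult_integral_contrapositive; auto.
Qed.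

Lemma Cderiv_cont_re f x l : Cderiv f x l -> continuity_pt (fun y => Cre (f y)) x.
Proof. intros [H _]. apply derivable_continuous_pt. exists (Cre l). exact H. Qed.


Lemma Cmul_cancel z a b : z <> C0 -> Cmul z a = Cmul z b -> a = b.
Proof.
  intros Hz H. transitivity (Cmul (Cinv z) (Cmul z a)). field; auto.
  rewrite H. field; auto.
Qed.

Lemma subeq a b : a = b -> Csub a b = C0.
Proof. intros ->. ring. Qed.

Lemma solve2 a b c d z1 z2 : Csub (Cmul a d) (Cmul b c) <> C0 ->
  Cadd (Cmul a z1) (Cmul b z2) = C0 -> Cadd (Cmul c z1) (Cmul d z2) = C0 ->
  z1 = C0 /\ z2 = C0.
Proof.
  intros Hd E1 E2. split.
  - apply (Cmul_cancel _ _ _ Hd).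
    transitivity (Csub (Cmul d (Cadd (Cmul a z1) (Cmul b z2))) (Cmul b (Cadd (Cmul c z1) (Cmul d z2)))).
    ring. rewrite E1, E2. ring.
  - apply (Cmul_cancel _ _ _ Hd).
    transitivity (Csub (Cmul a (Cadd (Cmul c z1) (Cmul d z2))) (Cmul c (Cadd (Cmul a z1) (Cmul b z2)))).
    ring. rewrite E1, E2. ring.
Qed.

Definition sol2 (m : nat -> nat -> Cpx) (y0 y1 : Cpx) (j : nat) : Cpx :=
  Copp (Cadd (Cmul (inv2 m j 0) y0) (Cmul (inv2 m j 1) y1)).

Lemma sol2_eq m y0 y1 : det2 m <> C0 ->
  Cadd (Cadd (Cmul (m 0%nat 0%nat) (sol2 m y0 y1 0)) (Cmul (m 0%nat 1%nat) (sol2 m y0 y1 1))) y0 = C0 /\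
  Cadd (Cadd (Cmul (m 1%nat 0%nat) (sol2 m y0 y1 0)) (Cmul (m 1%nat 1%nat) (sol2 m y0 y1 1))) y1 = C0.
Proof.
  intros Hd. unfold sol2, inv2. unfold det2 in *. split; field; exact Hd.
Qed.

Lemma eig_row0 (t : Mat3) Om w1 w2 :
  is_eigenvalue3 t Om ->
  Csub (Cmul (Csub (t 1%nat 1%nat) Om) (Csub (t 2%nat 2%nat) Om)) (Cmul (t 1%nat 2%nat) (t 2%nat 1%nat)) <> C0 ->
  Cadd (t 1%nat 0%nat) (Cadd (Cmul (t 1%nat 1%nat) w1) (Cmul (t 1%nat 2%nat) w2)) = Cmul Om w1 ->
  Cadd (t 2%nat 0%nat) (Cadd (Cmul (t 2%nat 1%nat) w1) (Cmul (t 2%nat 2%nat) w2)) = Cmul Om w2 ->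
  Cadd (t 0%nat 0%nat) (Cadd (Cmul (t 0%nat 1%nat) w1) (Cmul (t 0%nat 2%nat) w2)) = Om.
Proof.
  intros [v [[k [Hk Hvk]] Hv]] Hd R1 R2.
  pose proof (Hv 0%nat ltac:(lia)) as E0.
  pose proof (Hv 1%nat ltac:(lia)) as E1.
  pose proof (Hv 2%nat ltac:(lia)) as E2.
  destruct (solve2 _ _ _ _ (Csub (v 1%nat) (Cmul (v 0%nat) w1)) (Csub (v 2%nat) (Cmul (v 0%nat) w2)) Hd) as [Z1 Z2].
  - transitivity (Csub (Csub (Cadd (Cmul (t 1%nat 0%nat) (v 0%nat))
       (Cadd (Cmul (t 1%nat 1%nat) (v 1%nat)) (Cmul (t 1%nat 2%nat) (v 2%nat)))) (Cmul Om (v 1%nat)))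
       (Cmul (v 0%nat) (Csub (Cadd (t 1%nat 0%nat) (Cadd (Cmul (t 1%nat 1%nat) w1) (Cmul (t 1%nat 2%nat) w2))) (Cmul Om w1)))).
    ring. rewrite E1, R1. ring.
  - transitivity (Csub (Csub (Cadd (Cmul (t 2%nat 0%nat) (v 0%nat))
       (Cadd (Cmul (t 2%nat 1%nat) (v 1%nat)) (Cmul (t 2%nat 2%nat) (v 2%nat)))) (Cmul Om (v 2%nat)))
       (Cmul (v 0%nat) (Csub (Cadd (t 2%nat 0%nat) (Cadd (Cmul (t 2%nat 1%nat) w1) (Cmul (t 2%nat 2%nat) w2))) (Cmul Om w2)))).
    ring. rewrite E2, R2. ring.
  - assert (V1 : v 1%nat = Cmul (v 0%nat) w1).
    { transitivity (Cadd (Csub (v 1%nat) (Cmul (v 0%nat) w1)) (Cmul (v 0%nat) w1)). ring. rewrite Z1. ring. }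
    assert (V2 : v 2%nat = Cmul (v 0%nat) w2).
    { transitivity (Cadd (Csub (v 2%nat) (Cmul (v 0%nat) w2)) (Cmul (v 0%nat) w2)). ring. rewrite Z2. ring. }
    assert (H0 : v 0%nat <> C0).
    { intro H0. apply Hvk. destruct k as [|[|[|k]]]; try lia; auto.
      rewrite V1, H0; ring. rewrite V2, H0; ring. }
    apply (Cmul_cancel (v 0%nat)); auto.
    transitivity (Cadd (Cmul (t 0%nat 0%nat) (v 0%nat))
       (Cadd (Cmul (t 0%nat 1%nat) (v 1%nat)) (Cmul (t 0%nat 2%nat) (v 2%nat)))).
    rewrite V1, V2; ring. rewrite E0. ring.
Qed.

Definition comm3 (xm t : Mat3) : Mat3 := subM3 (mulM3 xm t) (mulM3 t xm).
Definition row3 (m : Mat3) (r : nat) (u0 u1 u2 : Cpx) : Cpx :=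
  Cadd (Cmul (m r 0%nat) u0) (Cadd (Cmul (m r 1%nat) u1) (Cmul (m r 2%nat) u2)).

Lemma kernel (t xm : Mat3) (Om w1 w2 v1 v2 : Cpx) :
  row3 t 0 Cone w1 w2 = Om ->
  row3 t 1 Cone w1 w2 = Cmul Om w1 ->
  row3 t 2 Cone w1 w2 = Cmul Om w2 ->
  Cadd (row3 (comm3 xm t) 1 Cone w1 w2) (row3 t 1 C0 v1 v2) = Cmul Om v1 ->
  Cadd (row3 (comm3 xm t) 2 Cone w1 w2) (row3 t 2 C0 v1 v2) = Cmul Om v2 ->
  Csub (Cmul (Csub (t 1%nat 1%nat) Om) (Csub (t 2%nat 2%nat) Om)) (Cmul (t 1%nat 2%nat) (t 2%nat 1%nat)) <> C0 ->
  v1 = Csub (row3 xm 1 Cone w1 w2) (Cmul (row3 xm 0 Cone w1 w2) w1) /\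
  v2 = Csub (row3 xm 2 Cone w1 w2) (Cmul (row3 xm 0 Cone w1 w2) w2).
Proof.
  intros H0 H1 H2 G1 G2 Hd.
  apply subeq in H0; apply subeq in H1; apply subeq in H2; apply subeq in G1; apply subeq in G2.
  set (c := row3 xm 0 Cone w1 w2) in *.
  set (z1 := Cadd (Csub v1 (row3 xm 1 Cone w1 w2)) (Cmul c w1)).
  set (z2 := Cadd (Csub v2 (row3 xm 2 Cone w1 w2)) (Cmul c w2)).
  destruct (solve2 _ _ _ _ z1 z2 Hd) as [Z1 Z2].
  - assert (E : Cadd (Cmul (Csub (t 1%nat 1%nat) Om) z1) (Cmul (t 1%nat 2%nat) z2) =
       Cadd (Csub (Cadd (row3 (comm3 xm t) 1 Cone w1 w2) (row3 t 1 C0 v1 v2)) (Cmul Om v1))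
        (Cadd (Copp (Cadd (Cmul (xm 1%nat 0%nat) (Csub (row3 t 0 Cone w1 w2) Om))
                 (Cadd (Cmul (xm 1%nat 1%nat) (Csub (row3 t 1 Cone w1 w2) (Cmul Om w1)))
                       (Cmul (xm 1%nat 2%nat) (Csub (row3 t 2 Cone w1 w2) (Cmul Om w2))))))
              (Cmul c (Csub (row3 t 1 Cone w1 w2) (Cmul Om w1))))).
    { unfold z1, z2, c, comm3, row3, subM3, mulM3. ring. }
    rewrite E, G1, H0, H1, H2. ring.
  - assert (E : Cadd (Cmul (t 2%nat 1%nat) z1) (Cmul (Csub (t 2%nat 2%nat) Om) z2) =
       Cadd (Csub (Cadd (row3 (comm3 xm t) 2 Cone w1 w2) (row3 t 2 C0 v1 v2)) (Cmul Om v2))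
        (Cadd (Copp (Cadd (Cmul (xm 2%nat 0%nat) (Csub (row3 t 0 Cone w1 w2) Om))
                 (Cadd (Cmul (xm 2%nat 1%nat) (Csub (row3 t 1 Cone w1 w2) (Cmul Om w1)))
                       (Cmul (xm 2%nat 2%nat) (Csub (row3 t 2 Cone w1 w2) (Cmul Om w2))))))
              (Cmul c (Csub (row3 t 2 Cone w1 w2) (Cmul Om w2))))).
    { unfold z1, z2, c, comm3, row3, subM3, mulM3. ring. }
    rewrite E, G2, H0, H1, H2. ring.
  - split.
    + transitivity (Cadd z1 (Csub (row3 xm 1 Cone w1 w2) (Cmul c w1))). unfold z1; ring.
      rewrite Z1; ring.
    + transitivity (Cadd z2 (Csub (row3 xm 2 Cone w1 w2) (Cmul c w2))). unfold z2; ring.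
      rewrite Z2; ring.
Qed.

Ltac crules H1 H2 :=
  repeat first [ apply Cderiv_opp | apply Cderiv_add | apply Cderiv_sub | apply Cderiv_mul
               | apply Cderiv_inv | apply H1; lia | apply H2; lia ].

Lemma sol2_deriv (M : R -> nat -> nat -> Cpx) (c : R -> nat -> Cpx) x
  (dM : nat -> nat -> Cpx) (dc : nat -> Cpx) :
  (forall j k, (j < 2)%nat -> (k < 2)%nat -> Cderiv (fun y => M y j k) x (dM j k)) ->
  (forall k, (k < 2)%nat -> Cderiv (fun y => c y k) x (dc k)) ->
  det2 (M x) <> C0 ->
  forall j, (j < 2)%nat ->
  Cderiv (fun y => sol2 (M y) (c y 0%nat) (c y 1%nat) j) x
    (sol2 (M x)
      (Cadd (dc 0%nat) (Cadd (Cmul (dM 0%nat 0%nat) (sol2 (M x) (c x 0%nat) (c x 1%nat) 0))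
                             (Cmul (dM 0%nat 1%nat) (sol2 (M x) (c x 0%nat) (c x 1%nat) 1))))
      (Cadd (dc 1%nat) (Cadd (Cmul (dM 1%nat 0%nat) (sol2 (M x) (c x 0%nat) (c x 1%nat) 0))
                             (Cmul (dM 1%nat 1%nat) (sol2 (M x) (c x 0%nat) (c x 1%nat) 1)))) j).
Proof.
  intros HM Hc Hd j Hj.
  destruct j as [|[|j]]; try lia; unfold sol2, inv2; cbv zeta;
  (eapply Cderiv_val; [ crules HM Hc; exact Hd | unfold det2 in *; field; exact Hd ]).
Qed.

Lemma eq_via (a b e : Cpx) : e = C0 -> Csub a b = e -> a = b.
Proof.
  intros He H. transitivity (Cadd (Csub a b) b). ring. rewrite H, He. ring.
Qed.


Definition Wf zeta q1 q2 q1x q2x Om y j :=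
  sol2 (DshiftL zeta q1 q2 y Om) (CL zeta q1 q2 q1x q2x y 0) (CL zeta q1 q2 q1x q2x y 1) j.

Lemma det_conv zeta q1 q2 q1x q2x Om x :
  det2 (DshiftL zeta q1 q2 x Om) =
  Csub (Cmul (Csub (Tmat zeta q1 q2 q1x q2x x 1%nat 1%nat) Om) (Csub (Tmat zeta q1 q2 q1x q2x x 2%nat 2%nat) Om))
       (Cmul (Tmat zeta q1 q2 q1x q2x x 1%nat 2%nat) (Tmat zeta q1 q2 q1x q2x x 2%nat 1%nat)).
Proof. unfold det2; unfold DshiftL; cbn [Tmat Nat.eqb]. ring. Qed.

Lemma W_rows zeta q1 q2 q1x q2x Om x : det2 (DshiftL zeta q1 q2 x Om) <> C0 ->
  row3 (Tmat zeta q1 q2 q1x q2x x) 1 Cone (Wf zeta q1 q2 q1x q2x Om x 0) (Wf zeta q1 q2 q1x q2x Om x 1)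
    = Cmul Om (Wf zeta q1 q2 q1x q2x Om x 0) /\
  row3 (Tmat zeta q1 q2 q1x q2x x) 2 Cone (Wf zeta q1 q2 q1x q2x Om x 0) (Wf zeta q1 q2 q1x q2x Om x 1)
    = Cmul Om (Wf zeta q1 q2 q1x q2x Om x 1).
Proof.
  intros Hd. destruct (sol2_eq _ (CL zeta q1 q2 q1x q2x x 0) (CL zeta q1 q2 q1x q2x x 1) Hd) as [E1 E2].
  unfold Wf. set (w0 := sol2 _ _ _ 0) in *. set (w1 := sol2 _ _ _ 1) in *.
  unfold row3, DshiftL in *; cbn [Tmat Nat.eqb] in *.
  split; [apply (eq_via _ _ _ E1) | apply (eq_via _ _ _ E2)]; ring.
Qed.

Lemma row3_one (m : Mat3) r a b :
  row3 m r Cone a b = Cadd (m r 0%nat) (Cadd (Cmul (m r 1%nat) a) (Cmul (m r 2%nat) b)).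
Proof. unfold row3; ring. Qed.

Lemma W_deriv zeta q1 q2 q1x q2x Om x
  (hlax : forall i j, (i < 3)%nat -> (j < 3)%nat ->
     Cderiv (fun y => Tmat zeta q1 q2 q1x q2x y i j) x
            (subM3 (mulM3 (Xmat zeta q1 q2 x) (Tmat zeta q1 q2 q1x q2x x))
                   (mulM3 (Tmat zeta q1 q2 q1x q2x x) (Xmat zeta q1 q2 x)) i j))
  (Hd : det2 (DshiftL zeta q1 q2 x Om) <> C0)
  (Heig : is_eigenvalue3 (Tmat zeta q1 q2 q1x q2x x) Om) :
  forall j, (j < 2)%nat ->
  Cderiv (fun y => Wf zeta q1 q2 q1x q2x Om y j) x
    (Csub (row3 (Xmat zeta q1 q2 x) (S j) Cone (Wf zeta q1 q2 q1x q2x Om x 0) (Wf zeta q1 q2 q1x q2x Om x 1))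
          (Cmul (row3 (Xmat zeta q1 q2 x) 0 Cone (Wf zeta q1 q2 q1x q2x Om x 0) (Wf zeta q1 q2 q1x q2x Om x 1))
                (Wf zeta q1 q2 q1x q2x Om x j))).
Proof.
  intros j Hj.
  set (TT := Tmat zeta q1 q2 q1x q2x x) in *.
  set (XX := Xmat zeta q1 q2 x) in *.
  assert (HM : forall j k, (j < 2)%nat -> (k < 2)%nat ->
     Cderiv (fun y => DshiftL zeta q1 q2 y Om j k) x (Csub (comm3 XX TT (S j) (S k)) C0)).
  { intros a b Ha Hb. unfold DshiftL. apply Cderiv_sub.
    - exact (hlax (S a) (S b) ltac:(lia) ltac:(lia)).
    - apply Cderiv_const. }
  assert (HC : forall k, (k < 2)%nat ->
     Cderiv (fun y => CL zeta q1 q2 q1x q2x y k) x (comm3 XX TT (S k) 0%nat)).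
  { intros a Ha. exact (hlax (S a) 0%nat ltac:(lia) ltac:(lia)). }
  pose proof (sol2_deriv (fun y => DshiftL zeta q1 q2 y Om) (fun y k => CL zeta q1 q2 q1x q2x y k) x
     _ _ HM HC Hd j Hj) as HW.
  eapply Cderiv_val; [exact HW|].
  pose proof (W_rows zeta q1 q2 q1x q2x Om x Hd) as [R1 R2].
  pose proof (det_conv zeta q1 q2 q1x q2x Om x) as Edet.
  fold TT in Edet. rewrite Edet in Hd.
  rewrite row3_one in R1, R2. fold TT in R1, R2.
  pose proof (eig_row0 _ _ _ _ Heig Hd R1 R2) as R0.
  rewrite <- row3_one in R0, R1, R2.
  match goal with |- sol2 _ ?r0 ?r1 _ = _ => set (rr0 := r0); set (rr1 := r1) end.
  destruct (sol2_eq (DshiftL zeta q1 q2 x Om) rr0 rr1) as [F1 F2].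
  { rewrite Edet. exact Hd. }
  unfold Wf in *.
  set (w0 := sol2 _ (CL zeta q1 q2 q1x q2x x 0) _ 0) in *.
  set (w1 := sol2 _ (CL zeta q1 q2 q1x q2x x 0) _ 1) in *.
  set (v0 := sol2 _ rr0 rr1 0) in *.
  set (v1 := sol2 _ rr0 rr1 1) in *.
  destruct (kernel TT XX Om w0 w1 v0 v1 R0 R1 R2) as [K1 K2]; auto.
  - apply (eq_via _ _ _ F1). unfold rr0, row3, DshiftL, TT. cbn [Tmat Nat.eqb]. ring.
  - apply (eq_via _ _ _ F2). unfold rr1, row3, DshiftL, TT. cbn [Tmat Nat.eqb]. ring.
  - destruct j as [|[|j]]; try lia; assumption.
Qed.


Lemma integrand_eq zeta q1 q2 q1x q2x Om x :
  integrandL zeta q1 q2 q1x q2x Om x =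
  Copp (Cadd (Cmul (q1 x) (Wf zeta q1 q2 q1x q2x Om x 0)) (Cmul (q2 x) (Wf zeta q1 q2 q1x q2x Om x 1))).
Proof. unfold integrandL, Wf, sol2. cbv zeta. unfold betaL, qv. ring. Qed.

Lemma final_identity zeta q1 q2 x w0 w1 :
  let v0 := Csub (row3 (Xmat zeta q1 q2 x) 1 Cone w0 w1) (Cmul (row3 (Xmat zeta q1 q2 x) 0 Cone w0 w1) w0) in
  let v1 := Csub (row3 (Xmat zeta q1 q2 x) 2 Cone w0 w1) (Cmul (row3 (Xmat zeta q1 q2 x) 0 Cone w0 w1) w1) in
  Cre (Cadd C0 (Cadd (Cadd (Cmul (Cconj v0) w0) (Cmul (Cconj w0) v0))
                     (Cadd (Cmul (Cconj v1) w1) (Cmul (Cconj w1) v1))))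
  = 2 * Cre (Copp (Cadd (Cmul (q1 x) w0) (Cmul (q2 x) w1))) *
    Cre (Cadd Cone (Cadd (Cmul (Cconj w0) w0) (Cmul (Cconj w1) w1))).
Proof.
  intros v0 v1. unfold v0, v1, row3, Xmat. cbn [Nat.eqb].
  unfold alphaL, betaL, gammaL, rhoL, qv.
  destruct (q1 x) as [a b], (q2 x) as [c d], w0 as [e f], w1 as [g h].
  unfold Cadd, Cmul, Csub, Copp, Cconj, Cof, Ci, C0, Cone; simpl. ring.
Qed.

Lemma Cderiv_unique f x l1 l2 : Cderiv f x l1 -> Cderiv f x l2 -> l1 = l2.
Proof.
  intros [H1 H2] [H3 H4]. apply Cext; eapply uniqueness_limite; eauto.
Qed.

Lemma dpl_shift (f : R -> R) x P l : derivable_pt_lim f (x + P) l ->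
  derivable_pt_lim (fun y => f (y + P)) x l.
Proof.
  intros H.
  assert (Hs : derivable_pt_lim (fun y => y + P) x 1).
  { pose proof (derivable_pt_lim_plus _ _ _ _ _ (derivable_pt_lim_id x) (derivable_pt_lim_const P x)) as X.
    unfold plus_fct, id in X. eapply dpl_val; [exact X|ring]. }
  pose proof (derivable_pt_lim_comp _ _ _ _ _ Hs H) as X. unfold comp in X.
  eapply dpl_val; [exact X|ring].
Qed.

Lemma deriv_periodic (q qx : R -> Cpx) P :
  (forall x, Cderiv q x (qx x)) -> (forall x, q (x + P) = q x) -> qx P = qx 0.
Proof.
  intros hd hp. apply (Cderiv_unique q 0).
  - assert (E : q = fun y => q (y + P)) by (apply functional_extensionality; intro; rewrite hp; auto).
    destruct (hd P) as [H1 H2]. rewrite E. split.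
    + apply (dpl_shift (fun y => Cre (q y))). rewrite Rplus_0_l. exact H1.
    + apply (dpl_shift (fun y => Cim (q y))). rewrite Rplus_0_l. exact H2.
  - apply hd.
Qed.

Definition Nf zeta q1 q2 q1x q2x Om y :=
  Cre (Cadd Cone (Cadd (Cmul (Cconj (Wf zeta q1 q2 q1x q2x Om y 0)) (Wf zeta q1 q2 q1x q2x Om y 0))
                       (Cmul (Cconj (Wf zeta q1 q2 q1x q2x Om y 1)) (Wf zeta q1 q2 q1x q2x Om y 1)))).

Lemma Nf_pos zeta q1 q2 q1x q2x Om y : 0 < Nf zeta q1 q2 q1x q2x Om y.
Proof.
  unfold Nf. destruct (Wf zeta q1 q2 q1x q2x Om y 0) as [a b], (Wf zeta q1 q2 q1x q2x Om y 1) as [c d].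
  unfold Cadd, Cmul, Cconj, Cone, Cof; simpl. nra.
Qed.

Definition gf zeta q1 q2 q1x q2x Om y := ln (Nf zeta q1 q2 q1x q2x Om y) * / 2.

Lemma part3 (P zeta : R) (q1 q2 q1x q2x : R -> Cpx)
  (hP : 0 < P)
  (hd1 : forall x, Cderiv q1 x (q1x x)) (hd2 : forall x, Cderiv q2 x (q2x x))
  (hper : forall x, q1 (x + P) = q1 x /\ q2 (x + P) = q2 x)
  (hlax : forall x i j, (i < 3)%nat -> (j < 3)%nat ->
     Cderiv (fun y => Tmat zeta q1 q2 q1x q2x y i j) x
            (subM3 (mulM3 (Xmat zeta q1 q2 x) (Tmat zeta q1 q2 q1x q2x x))
                   (mulM3 (Tmat zeta q1 q2 q1x q2x x) (Xmat zeta q1 q2 x)) i j))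
  (Om : Cpx)
  (heig : forall x, is_eigenvalue3 (Tmat zeta q1 q2 q1x q2x x) Om)
  (hdet : forall x, det2 (DshiftL zeta q1 q2 x Om) <> C0) :
  exists pr : Riemann_integrable
                (fun x => Cre (integrandL zeta q1 q2 q1x q2x Om x)) 0 P,
    RiemannInt pr = 0.
Proof.
  pose proof (fun x => W_deriv zeta q1 q2 q1x q2x Om x (hlax x) (hdet x) (heig x)) as HW.
  assert (Hcont : forall x, continuity_pt (fun y => Cre (integrandL zeta q1 q2 q1x q2x Om y)) x).
  { intro x. eapply Cderiv_cont_re.
    eapply Cderiv_ext. { intro y. symmetry. apply integrand_eq. }
    apply Cderiv_opp. apply Cderiv_add; apply Cderiv_mul; auto. }
  assert (Hg : forall x, derivable_pt_lim (gf zeta q1 q2 q1x q2x Om) x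
                 (Cre (integrandL zeta q1 q2 q1x q2x Om x))).
  { intro x.
    assert (HF := Cderiv_add _ _ x _ _ (Cderiv_const Cone x)
       (Cderiv_add _ _ x _ _
          (Cderiv_mul _ _ x _ _ (Cderiv_conj _ x _ (HW x 0%nat ltac:(lia))) (HW x 0%nat ltac:(lia)))
          (Cderiv_mul _ _ x _ _ (Cderiv_conj _ x _ (HW x 1%nat ltac:(lia))) (HW x 1%nat ltac:(lia))))).
    destruct HF as [HN _].
    pose proof (Nf_pos zeta q1 q2 q1x q2x Om x) as Npos.
    pose proof (derivable_pt_lim_comp _ _ _ _ _ HN (derivable_pt_lim_ln _ Npos)) as X.
    pose proof (derivable_pt_lim_mult _ _ _ _ _ X (derivable_pt_lim_const (/ 2) x)) as X2.
    unfold mult_fct, comp in X2.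
    eapply dpl_val; [exact X2|].
    rewrite final_identity. rewrite integrand_eq. fold (Nf zeta q1 q2 q1x q2x Om x).
    unfold fct_cte. field. lra. }
  set (g := gf zeta q1 q2 q1x q2x Om) in *.
  set (f := fun x => Cre (integrandL zeta q1 q2 q1x q2x Om x)) in *.
  assert (Hder : derivable g) by (intro x; exists (f x); apply Hg).
  assert (Hdeq : derive g Hder = f).
  { apply functional_extensionality; intro x. unfold derive. apply derive_pt_eq_0. apply Hg. }
  assert (cont1 : continuity (derive g Hder)) by (rewrite Hdeq; exact Hcont).
  pose (pr0 := @continuity_implies_RiemannInt f 0 P (Rlt_le _ _ hP) (fun x _ => Hcont x)).
  pose (pr1 := @continuity_implies_RiemannInt (derive g Hder) 0 P (Rlt_le _ _ hP) (fun x _ => cont1 x)).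
  exists pr0.
  rewrite (RiemannInt_P18 pr0 pr1 (Rlt_le _ _ hP)) by (intros; rewrite Hdeq; reflexivity).
  pose (F := mkC1 cont1).
  etransitivity; [exact (@FTC_Riemann F 0 P pr1)|]. unfold F; simpl.
  assert (Eq1 : q1 P = q1 0) by (rewrite <- (Rplus_0_l P); apply hper).
  assert (Eq2 : q2 P = q2 0) by (rewrite <- (Rplus_0_l P); apply hper).
  assert (Eqx1 : q1x P = q1x 0) by (apply (deriv_periodic q1); auto; apply hper).
  assert (Eqx2 : q2x P = q2x 0) by (apply (deriv_periodic q2); auto; apply hper).
  unfold g, gf, Nf, Wf, DshiftL, CL, DL, qv, qxv.
  rewrite Eq1, Eq2, Eqx1, Eqx2. ring.
Qed.


Lemma Tskew zeta q1 q2 q1x q2x x : skew_hermitian3 (Tmat zeta q1 q2 q1x q2x x).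
Proof.
  intros i j Hi Hj.
  destruct i as [|[|[|i]]]; try lia; destruct j as [|[|[|j]]]; try lia;
  apply Cext; unfold Tmat, AL, BL, CL, DL, qv, qxv, Cadd, Cmul, Copp, Cconj, Csub, Cof, Ci, C0;
  simpl; ring.
Qed.

Lemma skew_eig (M : Mat3) Om : skew_hermitian3 M -> is_eigenvalue3 M Om -> Cre Om = 0.
Proof.
  intros HS [v [[k [Hk Hvk]] Hv]].
  pose proof (Hv 0%nat ltac:(lia)) as E0.
  pose proof (Hv 1%nat ltac:(lia)) as E1.
  pose proof (Hv 2%nat ltac:(lia)) as E2.
  rewrite (HS 1%nat 0%nat), (HS 2%nat 0%nat), (HS 2%nat 1%nat) in * by lia.
  pose proof (HS 0%nat 0%nat ltac:(lia) ltac:(lia)) as D0.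
  pose proof (HS 1%nat 1%nat ltac:(lia) ltac:(lia)) as D1.
  pose proof (HS 2%nat 2%nat ltac:(lia) ltac:(lia)) as D2.
  apply (f_equal Cre) in D0, D1, D2.
  apply (f_equal Cim) in E0 as F0, E1 as F1, E2 as F2.
  apply (f_equal Cre) in E0, E1, E2.
  assert (Hpos : 0 < Cre (v 0%nat) * Cre (v 0%nat) + Cim (v 0%nat) * Cim (v 0%nat)
     + (Cre (v 1%nat) * Cre (v 1%nat) + Cim (v 1%nat) * Cim (v 1%nat))
     + (Cre (v 2%nat) * Cre (v 2%nat) + Cim (v 2%nat) * Cim (v 2%nat))).
  { assert (forall z, z <> C0 -> 0 < Cre z * Cre z + Cim z * Cim z).
    { intros z Hz. pose proof (Cnorm_pos z Hz). nra. }
    destruct k as [|[|[|k]]]; try lia; specialize (H _ Hvk); nra. }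
  revert E0 E1 E2 F0 F1 F2 D0 D1 D2 Hpos.
  destruct (M 0%nat 0%nat) as [a00 b00], (M 0%nat 1%nat) as [a01 b01], (M 0%nat 2%nat) as [a02 b02],
    (M 1%nat 1%nat) as [a11 b11], (M 1%nat 2%nat) as [a12 b12],
     (M 2%nat 2%nat) as [a22 b22], (v 0%nat) as [x0 y0], (v 1%nat) as [x1 y1], (v 2%nat) as [x2 y2], Om as [r s].
  unfold Cadd, Cmul, Copp, Cconj; simpl. intros.
  assert (a00 = 0) by lra. assert (a11 = 0) by lra. assert (a22 = 0) by lra. subst.
  assert (Hkey : r * (x0 * x0 + y0 * y0 + (x1 * x1 + y1 * y1) + (x2 * x2 + y2 * y2)) =
    x0 * (r * x0 - s * y0) + y0 * (r * y0 + s * x0) + x1 * (r * x1 - s * y1) + y1 * (r * y1 + s * x1)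
    + x2 * (r * x2 - s * y2) + y2 * (r * y2 + s * x2)) by ring.
  rewrite <- E0, <- E1, <- E2, <- F0, <- F1, <- F2 in Hkey.
  ring_simplify in Hkey. nra.
Qed.


Theorem mainTheorem5 (P zeta : R) (q1 q2 q1x q2x : R -> Cpx)
  (hP : 0 < P)
  (hs1 : smoothC q1) (hs2 : smoothC q2)
  (hd1 : forall x, Cderiv q1 x (q1x x)) (hd2 : forall x, Cderiv q2 x (q2x x))
  (hper : forall x, q1 (x + P) = q1 x /\ q2 (x + P) = q2 x)
  (hlax : forall x i j, (i < 3)%nat -> (j < 3)%nat ->
     Cderiv (fun y => Tmat zeta q1 q2 q1x q2x y i j) x
            (subM3 (mulM3 (Xmat zeta q1 q2 x) (Tmat zeta q1 q2 q1x q2x x))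
                   (mulM3 (Tmat zeta q1 q2 q1x q2x x) (Xmat zeta q1 q2 x)) i j)) :
  (forall x, skew_hermitian3 (Tmat zeta q1 q2 q1x q2x x)) /\
  (forall x Om, is_eigenvalue3 (Tmat zeta q1 q2 q1x q2x x) Om -> Cre Om = 0) /\
  (forall Om : Cpx,
     (forall x, is_eigenvalue3 (Tmat zeta q1 q2 q1x q2x x) Om) ->
     (forall x, det2 (DshiftL zeta q1 q2 x Om) <> C0) ->
     exists pr : Riemann_integrable
                   (fun x => Cre (integrandL zeta q1 q2 q1x q2x Om x)) 0 P,
       RiemannInt pr = 0).
Proof.
  split; [intro x; apply Tskew|].
  split.
  - intros x Om H. exact (skew_eig _ _ (Tskew zeta q1 q2 q1x q2x x) H).
  - intros Om heig hdet. exact (part3 P zeta q1 q2 q1x q2x hP hd1 hd2 hper hlax Om heig hdet).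
Qed.
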